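(* For every polynomial knot $\phi:\mathbb R\to\mathbb R^3$ there exist a nonzero vector $v\in\mathbb R^3$ and a smooth map $F:[0,1]\times\mathbb R\to\mathbb R^3$ such that for every $s\in[0,1]$ the map $F_s=F(s,\cdot)$ is a polynomial knot, $F_0(t)=tv$ for all $t\in\mathbb R$, and $F_1=\phi$.
   Context: A polynomial knot is a map $\phi:\mathbb R\to\mathbb R^3$ whose components are real polynomials and which is a smooth embedding, i.e. $\phi$ is injective and $\phi'(t)\ne0$ for all $t\in\mathbb R$. *)

(* Defs.v *)
From Stdlib Require Import Reals List.
Open Scope R_scope.

Definition R3 : Type := (R * R * R)%type.
Definition cx (p : R3) : R := fst (fst p).
Definition cy (p : R3) : R := snd (fst p).
Definition cz (p : R3) : R := snd p.
Definition R3zero : R3 := (0, 0, 0).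
Definition R3scale (a : R) (v : R3) : R3 := (a * cx v, a * cy v, a * cz v).

(* Evaluation of a real polynomial given by its coefficient list
   [a0; a1; ...; an] (Horner scheme). *)
Definition peval (l : list R) (t : R) : R :=
  fold_right (fun a acc => a + t * acc) 0 l.

Definition is_poly_fun (f : R -> R) : Prop :=
  exists l : list R, forall t, f t = peval l t.

Definition poly_knot (phi : R -> R3) : Prop :=
  is_poly_fun (fun t => cx (phi t)) /\
  is_poly_fun (fun t => cy (phi t)) /\
  is_poly_fun (fun t => cz (phi t)) /\
  (forall t1 t2, phi t1 = phi t2 -> t1 = t2) /\
  (forall t, exists d1 d2 d3 : R,
      derivable_pt_lim (fun u => cx (phi u)) t d1 /\
      derivable_pt_lim (fun u => cy (phi u)) t d2 /\
      derivable_pt_lim (fun u => cz (phi u)) t d3 /\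
      (d1, d2, d3) <> R3zero).

Definition open2 (U : R -> R -> Prop) : Prop :=
  forall s t, U s t -> exists d, 0 < d /\
    forall s' t', Rabs (s' - s) < d -> Rabs (t' - t) < d -> U s' t'.

Definition cont2_on (U : R -> R -> Prop) (f : R -> R -> R) : Prop :=
  forall s t, U s t -> forall e, 0 < e -> exists d, 0 < d /\
    forall s' t', Rabs (s' - s) < d -> Rabs (t' - t) < d ->
      Rabs (f s' t' - f s t) < e.

Fixpoint Ck_on (k : nat) (U : R -> R -> Prop) (f : R -> R -> R) : Prop :=
  match k with
  | O => cont2_on U f
  | S k' => cont2_on U f /\
      exists fs ft : R -> R -> R,
        (forall s t, U s t ->
           derivable_pt_lim (fun x => f x t) s (fs s t) /\
           derivable_pt_lim (fun y => f s y) t (ft s t)) /\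
        Ck_on k' U fs /\ Ck_on k' U ft
  end.

Definition smooth_on (U : R -> R -> Prop) (f : R -> R -> R) : Prop :=
  forall k, Ck_on k U f.

(* F : [0,1] x R -> R^3 is smooth: it is smooth (C^infinity) on some open
   neighbourhood of [0,1] x R in R^2 (standard definition of smoothness on a
   non-open subset). Values of F outside [0,1] x R are irrelevant. *)
Definition smooth_strip (F : R -> R -> R3) : Prop :=
  exists U : R -> R -> Prop, open2 U /\
    (forall s t, 0 <= s <= 1 -> U s t) /\
    smooth_on U (fun s t => cx (F s t)) /\
    smooth_on U (fun s t => cy (F s t)) /\
    smooth_on U (fun s t => cz (F s t)).

(* Main.v *)
Require Import Defs.
From Stdlib Require Import Reals List Lra.
From Coquelicot Require Import Coquelicot.
Open Scope R_scope.

Inductive P2 : (R -> R -> R) -> Prop :=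
| P2c : forall c, P2 (fun _ _ => c)
| P2s : P2 (fun s _ => s)
| P2t : P2 (fun _ t => t)
| P2add : forall f g, P2 f -> P2 g -> P2 (fun s t => f s t + g s t)
| P2mul : forall f g, P2 f -> P2 g -> P2 (fun s t => f s t * g s t).

Lemma P2_cont : forall f, P2 f -> forall X : R * R,
  continuous (fun X : R * R => f (fst X) (snd X)) X.
Proof.
  induction 1; intros X.
  - apply continuous_const.
  - destruct X; apply continuous_fst.
  - destruct X; apply continuous_snd.
  - apply (continuous_plus (fun X => f (fst X) (snd X)) (fun X => g (fst X) (snd X))); auto.
  - apply (continuous_mult (fun X => f (fst X) (snd X)) (fun X => g (fst X) (snd X))); auto.
Qed.

Lemma P2_cont2 : forall U f, P2 f -> cont2_on U f.
Proof.
  intros U f Hf s t _ e He.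
  pose proof (P2_cont f Hf (s, t)) as H.
  apply filterlim_locally with (eps := mkposreal e He) in H.
  destruct H as [eps Heps].
  exists eps. split. apply cond_pos.
  intros s' t' H1 H2.
  apply (Heps (s', t')). split; assumption.
Qed.

Lemma P2_deriv : forall f, P2 f -> exists fs ft, P2 fs /\ P2 ft /\
  forall s t, derivable_pt_lim (fun x => f x t) s (fs s t) /\
              derivable_pt_lim (fun y => f s y) t (ft s t).
Proof.
  induction 1.
  - exists (fun _ _ => 0), (fun _ _ => 0). repeat split; try constructor;
    apply derivable_pt_lim_const.
  - exists (fun _ _ => 1), (fun _ _ => 0). repeat split; try constructor.
    apply derivable_pt_lim_id. apply derivable_pt_lim_const.
  - exists (fun _ _ => 0), (fun _ _ => 1). repeat split; try constructor.
    apply derivable_pt_lim_const. apply derivable_pt_lim_id.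
  - destruct IHP2_1 as [fs [ft [Hs [Ht Hd]]]].
    destruct IHP2_2 as [gs [gt [Gs [Gt Gd]]]].
    exists (fun s t => fs s t + gs s t), (fun s t => ft s t + gt s t).
    split; [apply P2add; assumption|split; [apply P2add; assumption|intros s t; split]].
    + apply (derivable_pt_lim_plus (fun x => f x t) (fun x => g x t)); [apply Hd|apply Gd].
    + apply (derivable_pt_lim_plus (fun x => f s x) (fun x => g s x)); [apply Hd|apply Gd].
  - destruct IHP2_1 as [fs [ft [Hs [Ht Hd]]]].
    destruct IHP2_2 as [gs [gt [Gs [Gt Gd]]]].
    exists (fun s t => fs s t * g s t + f s t * gs s t),
           (fun s t => ft s t * g s t + f s t * gt s t).
    split; [apply P2add; apply P2mul; assumption|split; [apply P2add; apply P2mul; assumption|intros s t; split]].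
    + apply (derivable_pt_lim_mult (fun x => f x t) (fun x => g x t)); [apply Hd|apply Gd].
    + apply (derivable_pt_lim_mult (fun x => f s x) (fun x => g s x)); [apply Hd|apply Gd].
Qed.

Lemma P2_Ck : forall k U f, P2 f -> Ck_on k U f.
Proof.
  induction k; intros U f Hf; simpl.
  - apply P2_cont2; auto.
  - split. apply P2_cont2; auto.
    destruct (P2_deriv f Hf) as [fs [ft [Hs [Ht Hd]]]].
    exists fs, ft. split; [intros; apply Hd|split; apply IHk; auto].
Qed.

Definition G (a : R) (l : list R) (s t : R) : R := s * a + t * peval l (s * t).

Lemma P2_peval : forall l, P2 (fun s t => peval l (s * t)).
Proof.
  induction l; simpl.
  - constructor.
  - apply (P2add (fun _ _ => a) (fun s t => s * t * peval l (s * t))). constructor.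
    apply (P2mul (fun s t => s * t) (fun s t => peval l (s * t))); auto.
    apply (P2mul (fun s t => s) (fun s t => t)); constructor.
Qed.

Lemma P2_G : forall a l, P2 (G a l).
Proof.
  intros a l. unfold G.
  apply (P2add (fun s t => s * a) (fun s t => t * peval l (s * t))).
  apply (P2mul (fun s t => s) (fun s t => a)); constructor.
  apply (P2mul (fun s t => t) (fun s t => peval l (s * t))). constructor. apply P2_peval.
Qed.

Lemma peval_cons : forall l t, peval l t = hd 0 l + t * peval (tl l) t.
Proof. destruct l; simpl; intros; ring. Qed.

Lemma peval_ex_derive : forall l x, ex_derive (peval l) x.
Proof.
  induction l; intros x; simpl.
  - apply ex_derive_const.
  - apply (ex_derive_plus (fun _ => a) (fun t => t * peval l t)).
    apply ex_derive_const.
    apply (ex_derive_mult (fun t => t) (peval l)). apply ex_derive_id. apply IHl.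
Qed.

Fixpoint sc (s : R) (l : list R) : list R :=
  match l with nil => nil | a :: l' => a :: map (Rmult s) (sc s l') end.

Lemma peval_map : forall s l t, peval (map (Rmult s) l) t = s * peval l t.
Proof. induction l; intros; simpl; [ring|rewrite IHl; ring]. Qed.

Lemma peval_sc : forall s l t, peval (sc s l) t = peval l (s * t).
Proof. induction l; intros; simpl; [ring|rewrite peval_map, IHl; ring]. Qed.

Lemma G_poly : forall a l s, is_poly_fun (G a l s).
Proof.
  intros a l s. exists (s * a :: sc s l). intros t.
  unfold G; simpl. rewrite peval_sc. ring.
Qed.

Section Comp.
Variable c : R -> R.
Variable l : list R.
Hypothesis Hc : forall t, c t = peval l t.
Let a := hd 0 l.
Let l' := tl l.

Lemma c_eq : forall t, c t = a + t * peval l' t.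
Proof. intros; rewrite Hc; apply peval_cons. Qed.

Lemma c_deriv : forall w d, derivable_pt_lim c w d ->
  d = peval l' w + w * Derive (peval l') w.
Proof.
  intros w d H. apply is_derive_Reals in H.
  assert (H2 : is_derive (fun u => a + u * peval l' u) w
     (peval l' w + w * Derive (peval l') w)).
  { auto_derive. apply peval_ex_derive. change (fun x => peval l' x) with (peval l'). ring. }
  apply (is_derive_ext _ c) in H2; [|intros; symmetry; apply c_eq].
  apply is_derive_unique in H. apply is_derive_unique in H2. congruence.
Qed.

Lemma G_deriv : forall s t d, derivable_pt_lim c (s * t) d ->
  derivable_pt_lim (G a l' s) t d.
Proof.
  intros s t d H. apply c_deriv in H. subst d. apply is_derive_Reals.
  unfold G. auto_derive. apply peval_ex_derive. change (fun x => peval l' x) with (peval l'). ring.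
Qed.

Lemma G_one : forall t, G a l' 1 t = c t.
Proof. intros; unfold G; rewrite c_eq, !Rmult_1_l; ring. Qed.

Lemma G_zero : forall t, G a l' 0 t = t * peval l' 0.
Proof. intros; unfold G; rewrite !Rmult_0_l; ring. Qed.

Lemma G_inj : forall s t1 t2, s <> 0 -> G a l' s t1 = G a l' s t2 ->
  c (s * t1) = c (s * t2).
Proof.
  intros s t1 t2 Hs H. unfold G in H. rewrite !c_eq.
  replace (a + s * t1 * peval l' (s * t1)) with (a - s * (s * a) + s * (s * a + t1 * peval l' (s * t1))) by ring.
  rewrite H. ring.
Qed.

Lemma v_deriv : forall d, derivable_pt_lim c 0 d -> d = peval l' 0.
Proof. intros d H. apply c_deriv in H. rewrite H. ring. Qed.
End Comp.

Lemma triple_eta : forall p : R3, p = (cx p, cy p, cz p).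
Proof. intros [[x y] z]; reflexivity. Qed.

Theorem mainTheorem7 :
  forall phi : R -> R3, poly_knot phi ->
  exists (v : R3) (F : R -> R -> R3),
    v <> R3zero /\
    smooth_strip F /\
    (forall s, 0 <= s <= 1 -> poly_knot (F s)) /\
    (forall t, F 0 t = R3scale t v) /\
    (forall t, F 1 t = phi t).
Proof.
  intros phi [[lx Hx] [[ly Hy] [[lz Hz] [Hinj Hder]]]].
  set (F := fun s t => (G (hd 0 lx) (tl lx) s t, G (hd 0 ly) (tl ly) s t,
                        G (hd 0 lz) (tl lz) s t)).
  set (v := (peval (tl lx) 0, peval (tl ly) 0, peval (tl lz) 0)).
  assert (Hv : v <> R3zero).
  { destruct (Hder 0) as [d1 [d2 [d3 [D1 [D2 [D3 Hd]]]]]].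
    apply (v_deriv _ _ Hx) in D1. apply (v_deriv _ _ Hy) in D2.
    apply (v_deriv _ _ Hz) in D3. unfold v. congruence. }
  exists v, F. split; [exact Hv|]. split.
  { exists (fun _ _ => True). split. intros s t _; exists 1; split; [lra|auto].
    split. auto. unfold F, cx, cy, cz; simpl.
    split; [|split]; intros k; apply P2_Ck, P2_G. }
  split.
  { intros s Hs. unfold poly_knot, F, cx, cy, cz; simpl.
    split; [apply G_poly|]. split; [apply G_poly|]. split; [apply G_poly|].
    split.
    - intros t1 t2 H. injection H as H1 H2 H3.
      destruct (Req_dec s 0) as [E|E].
      + subst s. rewrite !(G_zero lx), !(G_zero ly), !(G_zero lz) in *.
        unfold v, R3zero in Hv.
        destruct (Req_dec (peval (tl lx) 0) 0) as [A|A];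
        [destruct (Req_dec (peval (tl ly) 0) 0) as [B|B];
         [destruct (Req_dec (peval (tl lz) 0) 0) as [C|C]|]|].
        * exfalso; apply Hv; rewrite A, B, C; reflexivity.
        * apply Rmult_eq_reg_r with (r := peval (tl lz) 0); auto.
        * apply Rmult_eq_reg_r with (r := peval (tl ly) 0); auto.
        * apply Rmult_eq_reg_r with (r := peval (tl lx) 0); auto.
      + apply (G_inj _ _ Hx) in H1; auto. apply (G_inj _ _ Hy) in H2; auto.
        apply (G_inj _ _ Hz) in H3; auto.
        assert (phi (s * t1) = phi (s * t2)).
        { rewrite (triple_eta (phi (s * t1))), (triple_eta (phi (s * t2))).
          congruence. }
        apply Hinj in H. apply Rmult_eq_reg_l with s; auto.
    - intros t. destruct (Hder (s * t)) as [d1 [d2 [d3 [D1 [D2 [D3 Hd]]]]]].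
      exists d1, d2, d3. split; [|split; [|split]]; auto.
      + apply (G_deriv _ _ Hx); auto.
      + apply (G_deriv _ _ Hy); auto.
      + apply (G_deriv _ _ Hz); auto. }
  split.
  - intros t. unfold F, v, R3scale, cx, cy, cz; simpl.
    rewrite (G_zero lx), (G_zero ly), (G_zero lz). reflexivity.
  - intros t. unfold F. rewrite (G_one _ _ Hx), (G_one _ _ Hy), (G_one _ _ Hz).
    symmetry; apply triple_eta.
Qed.
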